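(* Consider a list of $l$ items with initial order $[a_1,a_2,\dots,a_l]$ and, for $s\ge1$, the request sequence $$\sigma_\gamma=\bigl\langle (a_l^3,a_{l-1}^3,\dots,a_1^3)^{2s}\bigr\rangle.$$ Under the full cost model, $\mathrm{MTFO}(\sigma_\gamma)=\mathrm{MTFE}(\sigma_\gamma)=s\,(3l^2+o(l^2))$, $\mathrm{TS}(\sigma_\gamma)=s\,(4l^2+o(l^2))$ and $\mathrm{OPT}(\sigma_\gamma)=s\,(2l^2+o(l^2))$, where the $o(l^2)$ terms depend only on $l$ and are $o(l^2)$ as $l\to\infty$.
   Context: Static list update: serving a request to the item at position $i$ (from the front) costs $i$ (full cost model); the accessed item may be moved closer to the front for free (free exchange); two adjacent items may be swapped at cost $1$ (paid exchange). $\mathrm{OPT}(\sigma)$ is the minimum cost of any offline algorithm from the same initial list. Notation: $a^3$ denotes three consecutive requests to $a$, and $(w)^{k}$ denotes $k$ concatenated copies of $w$. MTFO moves a requested item to the front on the 1st, 3rd, 5th, ... request to that item; MTFE on the 2nd, 4th, 6th, ... request; otherwise they leave it in place. TS (Timestamp): on a request to item $x$, if $x$ has been requested before and some item preceding $x$ has been requested at most once since the previous request to $x$, then $x$ is moved to immediately in front of the frontmost such item; otherwise nothing moves. *)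

(* Defs.v *)
From Stdlib Require Import Arith List Reals Classical ClassicalEpsilon Wf_nat.
Import ListNotations.

(** * List update model (full cost model).
    Items are natural numbers; the item a_i is represented by the number i.
    A list state is a [list nat] (front of the list = head). *)

Fixpoint pos (x : nat) (L : list nat) : nat :=
  match L with
  | [] => 0
  | y :: L' => if Nat.eqb x y then 0 else S (pos x L')
  end.

Definition access_cost (x : nat) (L : list nat) : nat := S (pos x L).

Definition del (x : nat) (L : list nat) : list nat :=
  filter (fun y => negb (Nat.eqb x y)) L.

Definition move_to_front (x : nat) (L : list nat) : list nat := x :: del x L.

Fixpoint insert_before (x y : nat) (L : list nat) : list nat :=
  match L with
  | [] => []
  | z :: L' => if Nat.eqb z y then x :: z :: L' else z :: insert_before x y L'
  end.

Fixpoint insert_at (k x : nat) (L : list nat) : list nat :=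
  match k, L with
  | 0, _ => x :: L
  | S k', z :: L' => z :: insert_at k' x L'
  | S _, [] => [x]
  end.

Definition occ (x : nat) (h : list nat) : nat := count_occ Nat.eq_dec h x.

(** An online rule receives the history of previous requests (oldest first),
    the current list and the current request, and returns the new list
    (the move is performed after paying the access cost). *)
Definition online_rule := list nat -> list nat -> nat -> list nat.

Fixpoint run_online (A : online_rule) (hist L σ : list nat) : nat :=
  match σ with
  | [] => 0
  | x :: σ' => access_cost x L + run_online A (hist ++ [x]) (A hist L x) σ'
  end.

Definition online_cost (A : online_rule) (L σ : list nat) : nat :=
  run_online A [] L σ.

Definition MTFO_rule : online_rule := fun hist L x =>
  if Nat.odd (S (occ x hist)) then move_to_front x L else L.

Definition MTFE_rule : online_rule := fun hist L x =>
  if Nat.even (S (occ x hist)) then move_to_front x L else L.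

Fixpoint take_until (x : nat) (l : list nat) : list nat :=
  match l with
  | [] => []
  | y :: l' => if Nat.eqb y x then [] else y :: take_until x l'
  end.

(** TS (Timestamp): if [x] was requested before, let [since] be the requests
    made strictly after the previous request to [x]; among the items preceding
    [x] in the list, those requested at most once in [since] are candidates;
    if there is one, [x] is moved immediately in front of the frontmost one. *)
Definition TS_rule : online_rule := fun hist L x =>
  if existsb (Nat.eqb x) hist then
    let since := take_until x (rev hist) in
    let cands := filter (fun y => Nat.leb (occ y since) 1) (firstn (pos x L) L) in
    match cands with
    | [] => L
    | y :: _ => insert_before x y (del x L)
    end
  else L.

Definition MTFO_cost (L σ : list nat) : nat := online_cost MTFO_rule L σ.
Definition MTFE_cost (L σ : list nat) : nat := online_cost MTFE_rule L σ.
Definition TS_cost (L σ : list nat) : nat := online_cost TS_rule L σ.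

(** Before serving the t-th request the algorithm performs a list of paid
    exchanges (a number j swaps the items at positions j and j+1, cost 1 each);
    then it pays the access cost; then it may move the accessed item, for free,
    to any position k closer to the front (if k is not smaller than its current
    position, nothing moves). A schedule gives these actions for each time t. *)
Fixpoint swap_adj (j : nat) (L : list nat) : list nat :=
  match j, L with
  | 0, a :: b :: L' => b :: a :: L'
  | S j', a :: L' => a :: swap_adj j' L'
  | _, _ => L
  end.

Definition free_move (x k : nat) (L : list nat) : list nat :=
  if Nat.ltb k (pos x L) then insert_at k x (del x L) else L.

Definition schedule := nat -> (list nat * nat).

Fixpoint run_offline (sch : schedule) (t : nat) (L σ : list nat) : nat :=
  match σ with
  | [] => 0
  | x :: σ' =>
      let (paid, k) := sch t in
      let L1 := fold_left (fun L j => swap_adj j L) paid L in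
      length paid + access_cost x L1 + run_offline sch (S t) (free_move x k L1) σ'
  end.

Definition offline_cost (sch : schedule) (L σ : list nat) : nat :=
  run_offline sch 0 L σ.

Definition is_opt (L σ : list nat) (c : nat) : Prop :=
  (exists sch, offline_cost sch L σ = c) /\ (forall sch, c <= offline_cost sch L σ).

Lemma opt_exists (L σ : list nat) : { c : nat | is_opt L σ c }.
Proof.
  apply constructive_indefinite_description.
  destruct (dec_inh_nat_subset_has_unique_least_element
              (fun c => exists sch, offline_cost sch L σ = c)) as [c [[H1 H2] _]].
  - intro n; apply classic.
  - exists (offline_cost (fun _ => ([], 0)) L σ); eauto.
  - exists c; split; [exact H1|].
    intro sch; apply H2; eauto.
Qed.

Definition OPT (L σ : list nat) : nat := proj1_sig (opt_exists L σ).

Definition init_list (l : nat) : list nat := seq 1 l.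

Definition round (l : nat) : list nat := flat_map (fun a => [a; a; a]) (rev (seq 1 l)).

Definition sigma_gamma (l s : nat) : list nat := concat (repeat (round l) (2 * s)).

Definition little_o_sq (g : nat -> R) : Prop :=
  forall eps : R, (eps > 0)%R ->
    exists N : nat, forall l : nat, (N <= l)%nat -> (Rabs (g l) <= eps * INR l ^ 2)%R.

(* Main.v *)
Require Import Defs.
From Stdlib Require Import Arith List Lia Permutation Bool.
Import ListNotations.


Lemma del_notin x M : ~ In x M -> del x M = M.
Proof.
  induction M as [|a M IH]; intro H; simpl; auto.
  unfold del in *; simpl.
  destruct (Nat.eqb_spec x a) as [e|e]; simpl.
  - exfalso; apply H; left; auto.
  - f_equal; apply IH; intro; apply H; right; auto.
Qed.

Lemma del_app x a b : del x (a ++ b) = del x a ++ del x b.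
Proof. unfold del; apply filter_app. Qed.

Lemma del_self x : del x [x] = [].
Proof. unfold del; simpl; rewrite Nat.eqb_refl; reflexivity. Qed.

Lemma pos_app_notin x p q : ~ In x p -> pos x (p ++ x :: q) = length p.
Proof.
  induction p as [|a p IH]; intro H; simpl.
  - rewrite Nat.eqb_refl; auto.
  - destruct (Nat.eqb_spec x a) as [e|e].
    + exfalso; apply H; left; auto.
    + f_equal; apply IH; intro; apply H; right; auto.
Qed.

Lemma pos_head x q : pos x (x :: q) = 0.
Proof. simpl; rewrite Nat.eqb_refl; auto. Qed.

Definition inv (l x : nat) := seq (S x) (l - x) ++ seq 1 x.
Definition pre (l x : nat) := seq (S x) (l - x) ++ seq 1 (x - 1).

Lemma pre_prop l x z : x <= l -> In z (pre l x) -> 1 <= z <= l /\ z <> x /\ (z < x \/ x < z).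
Proof.
  unfold pre; rewrite in_app_iff, !in_seq; lia.
Qed.

Lemma pre_notin l x : ~ In x (pre l x).
Proof. unfold pre; rewrite in_app_iff, !in_seq; lia. Qed.

Lemma pre_len l x : 1 <= x <= l -> length (pre l x) = l - 1.
Proof. intros; unfold pre; rewrite length_app, !length_seq; lia. Qed.

Lemma inv_split l x : 1 <= x <= l -> inv l x = pre l x ++ [x] /\ inv l (x - 1) = x :: pre l x.
Proof.
  intros H; destruct x as [|k]; [lia|].
  unfold inv, pre; split.
  - rewrite seq_S, app_assoc; simpl. rewrite Nat.sub_0_r. reflexivity.
  - replace (S k - 1) with k by lia. replace (l - k) with (S (l - S k)) by lia.
    simpl. reflexivity.
Qed.

Lemma inv_0 l : inv l 0 = seq 1 l.
Proof. unfold inv; simpl; rewrite Nat.sub_0_r, app_nil_r; auto. Qed.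
Lemma inv_l l : inv l l = seq 1 l.
Proof. unfold inv; rewrite Nat.sub_diag; auto. Qed.

Lemma mtf_last l x : 1 <= x <= l -> move_to_front x (pre l x ++ [x]) = x :: pre l x.
Proof.
  intros; unfold move_to_front; rewrite del_app, del_self, app_nil_r, del_notin; auto using pre_notin.
Qed.

Lemma mtf_head l x : move_to_front x (x :: pre l x) = x :: pre l x.
Proof.
  unfold move_to_front. unfold del; simpl; rewrite Nat.eqb_refl; simpl.
  fold (del x (pre l x)); rewrite del_notin; auto using pre_notin.
Qed.

Lemma cost_last l x : 1 <= x <= l -> access_cost x (pre l x ++ [x]) = l.
Proof. intros; unfold access_cost; rewrite pos_app_notin, pre_len; auto using pre_notin; lia. Qed.

Lemma cost_head l x : access_cost x (x :: pre l x) = 1.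
Proof. unfold access_cost; rewrite pos_head; auto. Qed.

Fixpoint final_list (A : online_rule) h L σ :=
  match σ with [] => L | x :: σ' => final_list A (h ++ [x]) (A h L x) σ' end.

Lemma run_app A a : forall b h L, run_online A h L (a ++ b) =
  run_online A h L a + run_online A (h ++ a) (final_list A h L a) b.
Proof.
  induction a as [|x a IH]; intros b h L; simpl.
  - rewrite app_nil_r; auto.
  - rewrite IH, <- app_assoc; simpl; lia.
Qed.

Lemma final_app A a : forall b h L, final_list A h L (a ++ b) =
  final_list A (h ++ a) (final_list A h L a) b.
Proof.
  induction a as [|x a IH]; intros b h L; simpl.
  - rewrite app_nil_r; auto.
  - rewrite IH, <- app_assoc; auto.
Qed.

Definition trip (a : nat) := [a; a; a].

Section Gen.
Variable A : online_rule.
Variable l c0 c1 : nat.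
Variable P : nat -> nat -> list nat -> Prop.
Definition cr r := if Nat.even r then c0 else c1.
Hypothesis Hstep : forall r x h, 1 <= x <= l -> P r x h ->
  run_online A h (inv l x) (trip x) = cr r /\
  final_list A h (inv l x) (trip x) = inv l (x - 1) /\ P r (x - 1) (h ++ trip x).
Hypothesis Hbridge : forall r h, P r 0 h -> P (S r) l h.

Lemma round_gen r x : x <= l -> forall h, P r x h ->
  run_online A h (inv l x) (flat_map trip (rev (seq 1 x))) = x * cr r /\
  final_list A h (inv l x) (flat_map trip (rev (seq 1 x))) = inv l 0 /\
  P r 0 (h ++ flat_map trip (rev (seq 1 x))).
Proof.
  induction x as [|x IH]; intros Hx h HP.
  - simpl; rewrite app_nil_r; auto.
  - rewrite seq_S, rev_unit.
    replace (flat_map trip (1 + x :: rev (seq 1 x))) with (trip (S x) ++ flat_map trip (rev (seq 1 x))) by reflexivity.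
    destruct (Hstep r (S x) h) as [H1 [H2 H3]]; [lia|auto|].
    replace (S x - 1) with x in * by lia.
    destruct (IH ltac:(lia) _ H3) as [G1 [G2 G3]].
    rewrite run_app, final_app, H1, H2, G1, G2, app_assoc; repeat split; auto; lia.
Qed.

Lemma rounds_gen s : forall r h, Nat.even r = true -> P r l h ->
  run_online A h (seq 1 l) (concat (repeat (round l) (2 * s))) = s * (l * c0 + l * c1).
Proof.
  induction s as [|s IH]; intros r h Hr HP; [simpl; lia|].
  replace (2 * S s) with (S (S (2 * s))) by lia. simpl repeat; simpl concat.
  set (R := round l). set (C := concat (repeat R (2 * s))).
  assert (HR : R = flat_map trip (rev (seq 1 l))) by reflexivity.
  destruct (round_gen r l (le_n _) h HP) as [A1 [A2 A3]].
  rewrite <- HR, inv_0, inv_l in *.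
  rewrite run_app, A1, A2.
  apply Hbridge in A3.
  destruct (round_gen (S r) l (le_n _) _ A3) as [B1 [B2 B3]].
  rewrite <- HR, inv_0, inv_l in *.
  rewrite run_app, B1, B2.
  apply Hbridge in B3.
  subst C R. rewrite (IH (S (S r))); [|simpl; auto|auto].
  unfold cr; rewrite Nat.even_succ, <- Nat.negb_even, Hr; simpl; nia.
Qed.
End Gen.


Lemma occ_snoc y h a : occ y (h ++ [a]) = occ y h + (if Nat.eqb a y then 1 else 0).
Proof.
  unfold occ; rewrite count_occ_app; simpl.
  destruct (Nat.eq_dec a y), (Nat.eqb_spec a y); subst; try contradiction; lia.
Qed.

Lemma occ_trip y h a : occ y (h ++ trip a) = occ y h + (if Nat.eqb a y then 3 else 0).
Proof.
  unfold trip. replace (h ++ [a;a;a]) with (((h ++ [a]) ++ [a]) ++ [a]) by (rewrite <- !app_assoc; reflexivity).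
  rewrite !occ_snoc. destruct (Nat.eqb a y); lia.
Qed.

Definition PM l (r x : nat) (h : list nat) : Prop :=
  forall y, 1 <= y <= l -> occ y h = if y <=? x then 3 * r else 3 * r + 3.

Lemma PM_bridge l r h : PM l r 0 h -> PM l (S r) l h.
Proof.
  unfold PM; intros H y Hy; rewrite H by auto.
  destruct (Nat.leb_spec y 0), (Nat.leb_spec y l); lia.
Qed.

Lemma PM_step l r x h : 1 <= x <= l -> PM l r x h -> PM l r (x - 1) (h ++ trip x).
Proof.
  unfold PM; intros Hx H y Hy. rewrite occ_trip, H by auto.
  destruct (Nat.eqb_spec x y);
  destruct (Nat.leb_spec y x), (Nat.leb_spec y (x - 1)); lia.
Qed.

Lemma pos_last l x : 1 <= x <= l -> pos x (pre l x ++ [x]) = l - 1.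
Proof. intros; rewrite pos_app_notin, pre_len; auto using pre_notin. Qed.

Lemma par1 r : Nat.odd (S (3 * r)) = Nat.even r.
Proof. rewrite Nat.odd_succ, Nat.even_mul; reflexivity. Qed.
Lemma par2 r : Nat.odd (S (3 * r + 1)) = negb (Nat.even r).
Proof. rewrite Nat.odd_succ, Nat.even_add, Nat.even_mul; simpl; destruct (Nat.even r); reflexivity. Qed.
Lemma par3 r : Nat.odd (S (3 * r + 1 + 1)) = Nat.even r.
Proof. rewrite Nat.odd_succ, !Nat.even_add, Nat.even_mul; simpl; destruct (Nat.even r); reflexivity. Qed.

Lemma MTFO_step l r x h : 1 <= x <= l -> PM l r x h ->
  run_online MTFO_rule h (inv l x) (trip x) = cr (l + 2) (2 * l + 1) r /\
  final_list MTFO_rule h (inv l x) (trip x) = inv l (x - 1) /\ PM l r (x - 1) (h ++ trip x).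
Proof.
  intros Hx HP. split; [|split]; [| |apply PM_step; auto].
  all: destruct (inv_split l x Hx) as [E1 E2]; rewrite E1; try rewrite E2.
  all: assert (O0 : occ x h = 3 * r) by (rewrite HP by lia; rewrite Nat.leb_refl; auto).
  all: unfold trip, cr; simpl; unfold MTFO_rule; rewrite !occ_snoc, Nat.eqb_refl, O0.
  all: rewrite par1, par2, ?par3.
  all: destruct (Nat.even r); cbn -[move_to_front pos pre]; rewrite ?mtf_last, ?mtf_head, ?pos_last, ?pos_head by auto;
    rewrite ?mtf_last, ?mtf_head, ?pos_last, ?pos_head by auto; auto; lia.
Qed.

Lemma epar1 r : Nat.even (S (3 * r)) = negb (Nat.even r).
Proof. rewrite Nat.even_succ, <- Nat.negb_even, Nat.even_mul; reflexivity. Qed.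
Lemma epar2 r : Nat.even (S (3 * r + 1)) = Nat.even r.
Proof. rewrite Nat.even_succ, <- Nat.negb_even, Nat.even_add, Nat.even_mul; simpl; destruct (Nat.even r); reflexivity. Qed.
Lemma epar3 r : Nat.even (S (3 * r + 1 + 1)) = negb (Nat.even r).
Proof. rewrite Nat.even_succ, <- Nat.negb_even, !Nat.even_add, Nat.even_mul; simpl; destruct (Nat.even r); reflexivity. Qed.

Lemma MTFE_step l r x h : 1 <= x <= l -> PM l r x h ->
  run_online MTFE_rule h (inv l x) (trip x) = cr (2 * l + 1) (l + 2) r /\
  final_list MTFE_rule h (inv l x) (trip x) = inv l (x - 1) /\ PM l r (x - 1) (h ++ trip x).
Proof.
  intros Hx HP. split; [|split]; [| |apply PM_step; auto].
  all: destruct (inv_split l x Hx) as [E1 E2]; rewrite E1; try rewrite E2.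
  all: assert (O0 : occ x h = 3 * r) by (rewrite HP by lia; rewrite Nat.leb_refl; auto).
  all: unfold trip, cr; simpl; unfold MTFE_rule; rewrite !occ_snoc, Nat.eqb_refl, O0.
  all: rewrite epar1, epar2, ?epar3.
  all: destruct (Nat.even r); cbn -[move_to_front pos pre]; rewrite ?mtf_last, ?mtf_head, ?pos_last, ?pos_head by auto;
    rewrite ?mtf_last, ?mtf_head, ?pos_last, ?pos_head by auto; auto; lia.
Qed.

Definition PT l (r x : nat) (h : list nat) : Prop :=
 (r = 0 -> forall y, 1 <= y <= x -> occ y h = 0) /\
 (r <> 0 -> forall y, 1 <= y <= x -> In y h /\ forall z, 1 <= z <= l -> (z < y \/ x < z) -> 2 <= occ z (take_until y (rev h))) /\
 (forall y, x < y <= l -> In y h /\ forall z, x < z < y -> 2 <= occ z (take_until y (rev h))).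

Lemma PT_bridge l r h : PT l r 0 h -> PT l (S r) l h.
Proof.
  intros [_ [_ H3]]; split; [lia|split; [|lia]].
  intros _ y Hy. destruct (H3 y ltac:(lia)) as [Hi Hz]; split; auto.
  intros z Hz1 Hz2; apply Hz; lia.
Qed.

Lemma rev_trip h x : rev (h ++ trip x) = x :: x :: x :: rev h.
Proof. rewrite rev_app_distr; reflexivity. Qed.

Lemma take_until_neq y a T : a <> y -> take_until y (a :: T) = a :: take_until y T.
Proof. intro H; simpl; destruct (Nat.eqb_spec a y); [contradiction|auto]. Qed.

Lemma occ_cons z a T : occ z (a :: T) = occ z T + (if Nat.eqb a z then 1 else 0).
Proof.
  unfold occ; simpl. destruct (Nat.eq_dec a z), (Nat.eqb_spec a z); try contradiction; lia.
Qed.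

Lemma PT_step l r x h : 1 <= x <= l -> PT l r x h -> PT l r (x - 1) (h ++ trip x).
Proof.
  intros Hx [H1 [H2 H3]]; split; [|split].
  - intros Hr y Hy. rewrite occ_trip, H1 by (auto; lia). destruct (Nat.eqb_spec x y); lia.
  - intros Hr y Hy. destruct (H2 Hr y ltac:(lia)) as [Hi Hz]. split.
    + apply in_or_app; auto.
    + intros z Hz1 Hz2. rewrite rev_trip, !take_until_neq by lia. rewrite !occ_cons.
      destruct (Nat.eqb_spec x z); [lia|]. specialize (Hz z Hz1 ltac:(lia)). lia.
  - intros y Hy. destruct (Nat.eq_dec y x) as [->|Hne].
    + split; [apply in_or_app; right; left; auto| intros; lia].
    + destruct (H3 y ltac:(lia)) as [Hi Hz]. split; [apply in_or_app; auto|].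
      intros z Hz1. rewrite rev_trip, !take_until_neq by lia. rewrite !occ_cons.
      destruct (Nat.eqb_spec x z); [lia|]. specialize (Hz z ltac:(lia)). lia.
Qed.

Lemma ex_in x h : existsb (Nat.eqb x) h = true <-> In x h.
Proof.
  rewrite existsb_exists; split.
  - intros [y [Hy E]]; apply Nat.eqb_eq in E; subst; auto.
  - intros; exists x; rewrite Nat.eqb_refl; auto.
Qed.

Lemma filter_all_false (f : nat -> bool) M : (forall z, In z M -> f z = false) -> filter f M = [].
Proof. induction M; simpl; intros H; auto. rewrite H by auto; apply IHM; auto. Qed.
Lemma filter_all_true (f : nat -> bool) M : (forall z, In z M -> f z = true) -> filter f M = M.
Proof. induction M; simpl; intros H; auto. rewrite H by auto; f_equal; apply IHM; auto. Qed.

Lemma firstn_pre l x : 1 <= x <= l -> firstn (pos x (pre l x ++ [x])) (pre l x ++ [x]) = pre l x.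
Proof.
  intros; rewrite pos_app_notin by apply pre_notin.
  rewrite firstn_app, firstn_all, Nat.sub_diag; simpl; apply app_nil_r.
Qed.

Lemma TS1 l r x h : 1 <= x <= l -> PT l r x h -> TS_rule h (pre l x ++ [x]) x = pre l x ++ [x].
Proof.
  intros Hx [H1 [H2 _]]. unfold TS_rule.
  destruct (Nat.eq_dec r 0) as [E|E].
  - assert (existsb (Nat.eqb x) h = false) as ->; auto.
    destruct (existsb (Nat.eqb x) h) eqn:Ee; auto. apply ex_in in Ee.
    apply (count_occ_not_In Nat.eq_dec h x) in Ee; [contradiction| apply H1; auto; lia].
  - destruct (H2 E x ltac:(lia)) as [Hi Hz]. apply ex_in in Hi. rewrite Hi.
    rewrite firstn_pre by auto. rewrite filter_all_false; auto.
    intros z Hz'. apply pre_prop in Hz'; [|lia].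
    apply Nat.leb_gt. specialize (Hz z ltac:(lia) ltac:(lia)). lia.
Qed.

Lemma TS2 l x h : 1 <= x <= l -> TS_rule (h ++ [x]) (pre l x ++ [x]) x = x :: pre l x.
Proof.
  intros Hx. unfold TS_rule.
  assert (existsb (Nat.eqb x) (h ++ [x]) = true) as -> by (apply ex_in; apply in_or_app; right; left; auto).
  rewrite rev_unit; simpl (take_until x (x :: _)); rewrite Nat.eqb_refl.
  rewrite firstn_pre by auto. rewrite filter_all_true by auto.
  destruct (pre l x) as [|y0 p] eqn:Ep; auto.
  rewrite <- Ep, del_app, del_self, app_nil_r, del_notin by apply pre_notin. rewrite Ep.
  simpl; rewrite Nat.eqb_refl; auto.
Qed.

Lemma TS3 l x h : TS_rule h (x :: pre l x) x = x :: pre l x.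
Proof.
  unfold TS_rule. rewrite pos_head. simpl firstn. simpl filter.
  destruct (existsb (Nat.eqb x) h); auto.
Qed.

Lemma TS_step l r x h : 1 <= x <= l -> PT l r x h ->
  run_online TS_rule h (inv l x) (trip x) = cr (2 * l + 1) (2 * l + 1) r /\
  final_list TS_rule h (inv l x) (trip x) = inv l (x - 1) /\ PT l r (x - 1) (h ++ trip x).
Proof.
  intros Hx HP. split; [|split]; [| |apply PT_step; auto].
  all: destruct (inv_split l x Hx) as [E1 E2]; rewrite E1; try rewrite E2.
  all: unfold trip, cr; simpl; rewrite (TS1 l r x h) by auto; rewrite TS2 by auto; rewrite ?TS3.
  - unfold access_cost; rewrite pos_last, pos_head by auto. destruct (Nat.even r); lia.
  - auto.
Qed.

Definition MTF_rule : online_rule := fun _ L x => free_move x 0 L.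

Lemma run_MTF σ : forall t h L, run_offline (fun _ => ([], 0)) t L σ = run_online MTF_rule h L σ.
Proof.
  induction σ as [|x σ IH]; intros t h L; simpl; auto.
  all: try (rewrite (IH _ (h ++ [x])); auto).
Qed.

Lemma MTF_step l r x h : 1 <= x <= l -> True ->
  run_online MTF_rule h (inv l x) (trip x) = cr (l + 2) (l + 2) r /\
  final_list MTF_rule h (inv l x) (trip x) = inv l (x - 1) /\ True.
Proof.
  intros Hx _.
  destruct (inv_split l x Hx) as [E1 E2]; rewrite E1, E2.
  assert (F1 : MTF_rule h (pre l x ++ [x]) x = x :: pre l x).
  { unfold MTF_rule, free_move. rewrite pos_last by auto.
    destruct (Nat.ltb_spec 0 (l - 1)).
    - simpl. rewrite del_app, del_self, app_nil_r, del_notin by apply pre_notin; auto.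
    - assert (pre l x = []) as -> by (apply length_zero_iff_nil; rewrite pre_len; lia). auto. }
  assert (F2 : forall h', MTF_rule h' (x :: pre l x) x = x :: pre l x).
  { intros; unfold MTF_rule, free_move; rewrite pos_head; auto. }
  unfold trip, cr; simpl; rewrite F1, !F2; split; auto.
  unfold access_cost; rewrite pos_last, pos_head by auto. destruct (Nat.even r); lia.
Qed.


Definition cnt (f : nat -> bool) (L : list nat) := length (filter f L).

Fixpoint dis (k : nat -> nat) (L : list nat) : nat :=
  match L with [] => 0 | a :: L' => cnt (fun b => k b <? k a) L' + dis k L' end.

Lemma cnt_app f a b : cnt f (a ++ b) = cnt f a + cnt f b.
Proof. unfold cnt; rewrite filter_app, length_app; auto. Qed.
Lemma cnt_cons f a b : cnt f (a :: b) = (if f a then 1 else 0) + cnt f b.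
Proof. unfold cnt; simpl; destruct (f a); auto. Qed.
Lemma cnt_le f a : cnt f a <= length a.
Proof. unfold cnt; apply filter_length_le. Qed.
Lemma cnt_all f a : (forall z, In z a -> f z = true) -> cnt f a = length a.
Proof. intros; unfold cnt; rewrite filter_all_true; auto. Qed.
Lemma cnt_none f a : (forall z, In z a -> f z = false) -> cnt f a = 0.
Proof. intros; unfold cnt; rewrite filter_all_false; auto. Qed.

Lemma cnt_swap f j : forall L, cnt f (swap_adj j L) = cnt f L.
Proof.
  induction j as [|j IH]; intros [|a L]; simpl; auto.
  - destruct L as [|b L]; auto. rewrite !cnt_cons; lia.
  - rewrite !(cnt_cons f a), IH; auto.
Qed.

Lemma dis_swap k j : forall L, dis k (swap_adj j L) <= dis k L + 1.
Proof.
  induction j as [|j IH]; intros [|a L]; simpl; auto.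
  - destruct L as [|b L]; simpl; [lia|].
    rewrite !cnt_cons. destruct (Nat.ltb_spec (k a) (k b)), (Nat.ltb_spec (k b) (k a)); lia.
  - specialize (IH L). rewrite cnt_swap. lia.
Qed.

Lemma perm_swap_adj j : forall L, Permutation (swap_adj j L) L.
Proof.
  induction j as [|j IH]; intros [|a L]; simpl; auto.
  - destruct L as [|b L]; auto. apply perm_swap.
Qed.

Lemma swap_del x j : forall L, del x (swap_adj j L) = del x L \/
  exists j', del x (swap_adj j L) = swap_adj j' (del x L).
Proof.
  unfold del. induction j as [|j IH]; intros [|a L]; simpl; auto.
  - destruct L as [|b L]; auto. simpl.
    destruct (Nat.eqb_spec x a), (Nat.eqb_spec x b); simpl; auto.
    right; exists 0; auto.
  - destruct (IH L) as [E|[j' E]]; destruct (Nat.eqb_spec x a); simpl; rewrite ?E; auto.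
    + right; exists j'; auto.
    + right; exists (S j'); simpl. auto.
Qed.

Lemma dis_del_swap k x j L : dis k (del x (swap_adj j L)) <= dis k (del x L) + 1.
Proof.
  destruct (swap_del x j L) as [E|[j' E]]; rewrite E; [lia|apply dis_swap].
Qed.

Definition fsw (P : list nat) (L : list nat) := fold_left (fun L j => swap_adj j L) P L.

Lemma fsw_perm P : forall L, Permutation (fsw P L) L.
Proof.
  unfold fsw; induction P as [|j P IH]; intros L; simpl; auto.
  eapply perm_trans; [apply IH|apply perm_swap_adj].
Qed.
Lemma fsw_dis k P : forall L, dis k (fsw P L) <= dis k L + length P.
Proof.
  unfold fsw; induction P as [|j P IH]; intros L; simpl; [lia|].
  specialize (IH (swap_adj j L)); pose proof (dis_swap k j L); lia.
Qed.
Lemma fsw_del_dis k x P : forall L, dis k (del x (fsw P L)) <= dis k (del x L) + length P.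
Proof.
  unfold fsw; induction P as [|j P IH]; intros L; simpl; [lia|].
  specialize (IH (swap_adj j L)); pose proof (dis_del_swap k x j L); lia.
Qed.

Lemma dis_decomp k x q : forall p, dis k (p ++ x :: q) =
  dis k (p ++ q) + cnt (fun b => k x <? k b) p + cnt (fun b => k b <? k x) q.
Proof.
  induction p as [|a p IH]; simpl. { unfold cnt at 2; simpl. lia. }
  rewrite IH, !cnt_app. rewrite !cnt_cons. simpl. lia.
Qed.

Lemma dis_ext k1 k2 L : (forall a b, In a L -> In b L -> (k1 a <? k1 b) = (k2 a <? k2 b)) ->
  dis k1 L = dis k2 L.
Proof.
  induction L as [|a L IH]; intros H; simpl; auto.
  rewrite IH by (intros; apply H; right; auto). f_equal.
  unfold cnt; f_equal. apply filter_ext_in. intros b Hb; apply H; simpl; auto.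
Qed.

Lemma dis_seq a n : dis (fun y => y) (seq a n) = 0.
Proof.
  revert a; induction n as [|n IH]; intros a; simpl; auto.
  rewrite IH, cnt_none; auto. intros z Hz; apply in_seq in Hz; apply Nat.ltb_ge; lia.
Qed.

Lemma del_idem x L : del x (del x L) = del x L.
Proof.
  unfold del; induction L as [|a L IH]; simpl; auto.
  destruct (Nat.eqb_spec x a); simpl; auto.
  destruct (Nat.eqb_spec x a); [contradiction|]; simpl; f_equal; auto.
Qed.

Lemma del_insert x k : forall M, del x (insert_at k x M) = del x M.
Proof.
  unfold del; induction k as [|k IH]; intros [|a M]; simpl; rewrite ?Nat.eqb_refl; simpl; auto.
  destruct (Nat.eqb x a); simpl; rewrite ?IH; auto.
Qed.

Lemma pos_insert x k : forall M, pos x (insert_at k x M) <= k.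
Proof.
  induction k as [|k IH]; intros [|a M]; simpl; rewrite ?Nat.eqb_refl; try lia.
  destruct (Nat.eqb x a); [lia|]. specialize (IH M); lia.
Qed.

Lemma perm_insert x k : forall M, Permutation (insert_at k x M) (x :: M).
Proof.
  induction k as [|k IH]; intros [|a M]; simpl; auto.
  eapply perm_trans; [apply perm_skip, IH|apply perm_swap].
Qed.

Lemma free_del x k L : del x (free_move x k L) = del x L.
Proof.
  unfold free_move; destruct (Nat.ltb k (pos x L)); auto.
  rewrite del_insert, del_idem; auto.
Qed.

Lemma free_pos x k L : pos x (free_move x k L) <= pos x L.
Proof.
  unfold free_move; destruct (Nat.ltb_spec k (pos x L)); auto.
  pose proof (pos_insert x k (del x L)); lia.
Qed.

Lemma del_split x p q : ~ In x p -> ~ In x q -> del x (p ++ x :: q) = p ++ q.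
Proof.
  intros; rewrite del_app; unfold del at 2; simpl; rewrite Nat.eqb_refl; simpl.
  fold (del x q); rewrite !del_notin; auto.
Qed.

Lemma free_perm x k p q : ~ In x p -> ~ In x q ->
  Permutation (free_move x k (p ++ x :: q)) (p ++ x :: q).
Proof.
  intros; unfold free_move; destruct (Nat.ltb k _); auto.
  rewrite del_split by auto.
  eapply perm_trans; [apply perm_insert|apply Permutation_middle].
Qed.

Definition U l := seq 1 l.

Lemma split_perm l L x : Permutation L (U l) -> 1 <= x <= l ->
  exists p q, L = p ++ x :: q /\ ~ In x p /\ ~ In x q /\
    (forall b, In b (p ++ q) -> 1 <= b <= l /\ b <> x) /\ length p + length q = l - 1.
Proof.
  intros HP Hx.
  assert (HI : In x L) by (apply (Permutation_in _ (Permutation_sym HP)); unfold U; apply in_seq; lia).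
  destruct (in_split _ _ HI) as [p [q E]].
  assert (ND : NoDup L) by (apply (Permutation_NoDup (Permutation_sym HP)), seq_NoDup).
  rewrite E in ND. pose proof (NoDup_remove_2 _ _ _ ND) as Hn.
  assert (Hb : forall b, In b (p ++ q) -> 1 <= b <= l /\ b <> x).
  { intros b Hb. split.
    - assert (In b L) by (rewrite E; apply in_app_iff in Hb; apply in_or_app; simpl; tauto).
      apply (Permutation_in _ HP) in H; unfold U in H; apply in_seq in H; lia.
    - intro; subst; contradiction. }
  exists p, q; split; [auto|split; [|split; [|split]]]; auto.
  - intro; apply Hn, in_or_app; auto.
  - intro; apply Hn, in_or_app; auto.
  - apply Permutation_length in HP. unfold U in HP; rewrite E, length_app, length_seq in HP; simpl in HP; lia.
Qed.

Lemma free_perm_U l x k L : Permutation L (U l) -> 1 <= x <= l -> Permutation (free_move x k L) (U l).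
Proof.
  intros HP Hx. destruct (split_perm l L x HP Hx) as [p [q [E [H1 [H2 _]]]]].
  subst; eapply perm_trans; [apply free_perm|]; auto.
Qed.

Definition key l x y := if x <? y then y else y + l.

Lemma key_top l x b : 1 <= x <= l -> 1 <= b <= l -> b <> x -> key l x b < key l x x.
Proof. intros; unfold key; destruct (Nat.ltb_spec x b), (Nat.ltb_spec x x); lia. Qed.
Lemma key_bot l x b : 1 <= x <= l -> 1 <= b <= l -> b <> x -> key l (x - 1) x < key l (x - 1) b.
Proof. intros; unfold key; destruct (Nat.ltb_spec (x - 1) b), (Nat.ltb_spec (x - 1) x); lia. Qed.
Lemma key_same l x b : 1 <= x -> b <> x -> key l x b = key l (x - 1) b.
Proof. intros; unfold key; destruct (Nat.ltb_spec (x - 1) b), (Nat.ltb_spec x b); lia. Qed.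

Lemma roc sch t L x σ : run_offline sch t L (x :: σ) =
  length (fst (sch t)) + access_cost x (fsw (fst (sch t)) L) +
  run_offline sch (S t) (free_move x (snd (sch t)) (fsw (fst (sch t)) L)) σ.
Proof. simpl; destruct (sch t); reflexivity. Qed.

Lemma LB_triple l sch t L x σ : Permutation L (U l) -> 1 <= x <= l ->
  exists L3, Permutation L3 (U l) /\
   l + 2 + dis (key l (x - 1)) L3 + run_offline sch (S (S (S t))) L3 σ <=
   run_offline sch t L (x :: x :: x :: σ) + dis (key l x) L.
Proof.
  intros HP Hx. rewrite !roc.
  set (P0 := fst (sch t)); set (k0 := snd (sch t)); set (L0' := fsw P0 L); set (L1 := free_move x k0 L0').
  set (P1 := fst (sch (S t))); set (k1 := snd (sch (S t))); set (L1' := fsw P1 L1); set (L2 := free_move x k1 L1').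
  set (P2 := fst (sch (S (S t)))); set (k2 := snd (sch (S (S t)))); set (L2' := fsw P2 L2); set (L3 := free_move x k2 L2').
  exists L3.
  assert (HP0 : Permutation L0' (U l)) by (eapply perm_trans; [apply fsw_perm|auto]).
  assert (HP1 : Permutation L1 (U l)) by (apply free_perm_U; auto).
  assert (HP1' : Permutation L1' (U l)) by (eapply perm_trans; [apply fsw_perm|auto]).
  assert (HP2 : Permutation L2 (U l)) by (apply free_perm_U; auto).
  assert (HP2' : Permutation L2' (U l)) by (eapply perm_trans; [apply fsw_perm|auto]).
  assert (HP3 : Permutation L3 (U l)) by (apply free_perm_U; auto).
  split; [auto|].
  set (kx := key l x); set (k' := key l (x - 1)).
  destruct (split_perm l L0' x HP0 Hx) as [p [q [E0 [Np [Nq [Hb Hl]]]]]].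
  assert (Pos0 : pos x L0' = length p) by (rewrite E0; apply pos_app_notin; auto).
  assert (D0 : dis kx L0' = dis kx (p ++ q) + cnt (fun b => kx x <? kx b) p + length q).
  { rewrite E0, dis_decomp, (cnt_all _ q); auto.
    intros z Hz; apply Nat.ltb_lt; apply key_top; auto; apply Hb; apply in_or_app; auto. }
  assert (Del0 : del x L0' = p ++ q) by (rewrite E0; apply del_split; auto).
  assert (F0 : dis kx L0' <= dis kx L + length P0) by apply fsw_dis.
  assert (Del1 : del x L1 = del x L0') by apply free_del.
  assert (F1 : dis kx (del x L1') <= dis kx (del x L1) + length P1) by apply fsw_del_dis.
  assert (Del2 : del x L2 = del x L1') by apply free_del.
  assert (F2 : dis kx (del x L2') <= dis kx (del x L2) + length P2) by apply fsw_del_dis.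
  assert (Del3 : del x L3 = del x L2') by apply free_del.
  assert (Pos3 : pos x L3 <= pos x L2') by apply free_pos.
  destruct (split_perm l L3 x HP3 Hx) as [p3 [q3 [E3 [Np3 [Nq3 [Hb3 Hl3]]]]]].
  assert (Pos3' : pos x L3 = length p3) by (rewrite E3; apply pos_app_notin; auto).
  assert (D3 : dis k' L3 <= dis kx (p3 ++ q3) + length p3).
  { rewrite E3, dis_decomp, (cnt_none _ q3).
    - rewrite (dis_ext k' kx).
      + pose proof (cnt_le (fun b => k' x <? k' b) p3); lia.
      + intros a b Ha Hb'. unfold k', kx.
        destruct (Hb3 a Ha) as [_ Na]; destruct (Hb3 b Hb') as [_ Nb].
        rewrite <- (key_same l x a), <- (key_same l x b) by (auto; lia). reflexivity.
    - intros z Hz; apply Nat.ltb_ge. pose proof (key_bot l x z Hx). unfold k'.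
      destruct (Hb3 z ltac:(apply in_or_app; auto)). specialize (H H0 H1). lia. }
  assert (Del3' : del x L3 = p3 ++ q3) by (rewrite E3; apply del_split; auto).
  unfold access_cost.
  rewrite Del3' in Del3. rewrite <- Del3, Del2 in F2. rewrite Del1, Del0 in F1.
  lia.
Qed.

Lemma LB_round l x : x <= l -> forall sch t L σ, Permutation L (U l) ->
  exists t' L', Permutation L' (U l) /\
   x * (l + 2) + dis (key l 0) L' + run_offline sch t' L' σ <=
   run_offline sch t L (flat_map trip (rev (seq 1 x)) ++ σ) + dis (key l x) L.
Proof.
  induction x as [|x IH]; intros Hx sch t L σ HP.
  - exists t, L; split; auto; simpl; lia.
  - rewrite seq_S, rev_unit.
    replace (flat_map trip (1 + x :: rev (seq 1 x)) ++ σ)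
      with (S x :: S x :: S x :: (flat_map trip (rev (seq 1 x)) ++ σ)) by reflexivity.
    destruct (LB_triple l sch t L (S x) (flat_map trip (rev (seq 1 x)) ++ σ) HP ltac:(lia))
      as [L3 [HP3 H3]].
    replace (S x - 1) with x in H3 by lia.
    destruct (IH ltac:(lia) sch (S (S (S t))) L3 σ HP3) as [t' [L' [HP' H']]].
    exists t', L'; split; auto. lia.
Qed.

Lemma key_l_0 l L : Permutation L (U l) -> dis (key l l) L = dis (key l 0) L.
Proof.
  intros HP; apply dis_ext. intros a b Ha Hb.
  apply (Permutation_in _ HP) in Ha; apply (Permutation_in _ HP) in Hb.
  unfold U in *; apply in_seq in Ha; apply in_seq in Hb. unfold key.
  destruct (Nat.ltb_spec l a), (Nat.ltb_spec l b), (Nat.ltb_spec 0 a), (Nat.ltb_spec 0 b); try lia.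
  destruct (Nat.ltb_spec (a + l) (b + l)), (Nat.ltb_spec a b); lia.
Qed.

Lemma LB_rounds l n : forall sch t L, Permutation L (U l) ->
  n * (l * (l + 2)) <= run_offline sch t L (concat (repeat (round l) n)) + dis (key l l) L.
Proof.
  induction n as [|n IH]; intros sch t L HP; [simpl; lia|].
  simpl repeat; simpl concat.
  destruct (LB_round l l (le_n _) sch t L (concat (repeat (round l) n)) HP) as [t' [L' [HP' H']]].
  specialize (IH sch t' L' HP'). rewrite key_l_0 in IH by auto.
  change (flat_map trip (rev (seq 1 l))) with (round l) in H'. lia.
Qed.

Lemma OPT_lb l s sch : 2 * s * (l * (l + 2)) <= offline_cost sch (init_list l) (sigma_gamma l s).
Proof.
  pose proof (LB_rounds l (2 * s) sch 0 (init_list l) (Permutation_refl _)) as H.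
  unfold offline_cost, sigma_gamma.
  assert (dis (key l l) (init_list l) = 0) as E.
  { rewrite (dis_ext _ (fun y => y)); [apply dis_seq|].
    intros a b Ha Hb; unfold init_list in *; apply in_seq in Ha; apply in_seq in Hb; unfold key.
    destruct (Nat.ltb_spec l a), (Nat.ltb_spec l b); try lia.
    destruct (Nat.ltb_spec (a + l) (b + l)), (Nat.ltb_spec a b); lia. }
  rewrite E in H. lia.
Qed.


Lemma MTFO_val l s : MTFO_cost (init_list l) (sigma_gamma l s) = s * (l * (l + 2) + l * (2 * l + 1)).
Proof.
  unfold MTFO_cost, online_cost, init_list, sigma_gamma.
  apply (rounds_gen MTFO_rule l (l + 2) (2 * l + 1) (PM l) (fun r x h => MTFO_step l r x h)
           (PM_bridge l) s 0 []); auto.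
  intros y Hy; simpl; unfold occ; simpl; destruct (Nat.leb_spec y l); lia.
Qed.

Lemma MTFE_val l s : MTFE_cost (init_list l) (sigma_gamma l s) = s * (l * (2 * l + 1) + l * (l + 2)).
Proof.
  unfold MTFE_cost, online_cost, init_list, sigma_gamma.
  apply (rounds_gen MTFE_rule l (2 * l + 1) (l + 2) (PM l) (fun r x h => MTFE_step l r x h)
           (PM_bridge l) s 0 []); auto.
  intros y Hy; simpl; unfold occ; simpl; destruct (Nat.leb_spec y l); lia.
Qed.

Lemma TS_val l s : TS_cost (init_list l) (sigma_gamma l s) = s * (l * (2 * l + 1) + l * (2 * l + 1)).
Proof.
  unfold TS_cost, online_cost, init_list, sigma_gamma.
  apply (rounds_gen TS_rule l (2 * l + 1) (2 * l + 1) (PT l) (fun r x h => TS_step l r x h)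
           (PT_bridge l) s 0 []); auto.
  split; [|split].
  - intros; unfold occ; auto.
  - intros; lia.
  - intros; lia.
Qed.

Lemma MTF_val l s : offline_cost (fun _ => ([], 0)) (init_list l) (sigma_gamma l s) = s * (l * (l + 2) + l * (l + 2)).
Proof.
  unfold offline_cost. rewrite (run_MTF _ 0 []). unfold init_list, sigma_gamma.
  apply (rounds_gen MTF_rule l (l + 2) (l + 2) (fun _ _ _ => True) (fun r x h => MTF_step l r x h)
           (fun _ _ H => H) s 0 []); auto.
Qed.

Lemma OPT_val l s : OPT (init_list l) (sigma_gamma l s) = 2 * s * (l * (l + 2)).
Proof.
  unfold OPT. destruct (opt_exists (init_list l) (sigma_gamma l s)) as [c [[sch Hs] Hall]]; simpl.
  pose proof (Hall (fun _ => ([], 0))) as H1. rewrite MTF_val in H1.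
  pose proof (OPT_lb l s sch) as H2. rewrite Hs in H2. nia.
Qed.

From Stdlib Require Import Reals Lra ZArith.


Lemma lo_lin c : (0 <= c)%R -> little_o_sq (fun l => c * INR l)%R.
Proof.
  intros Hc eps He. destruct (archimed (c / eps)) as [H1 _].
  assert (Hu : (0 <= IZR (up (c / eps)))%R).
  { assert (0 <= c / eps)%R by (unfold Rdiv; apply Rmult_le_pos; [auto|left; apply Rinv_0_lt_compat; lra]). lra. }
  exists (Z.to_nat (up (c / eps))). intros l Hl.
  apply le_INR in Hl. rewrite INR_IZR_INZ, Z2Nat.id in Hl by (apply le_IZR; lra).
  pose proof (pos_INR l).
  rewrite Rabs_right by (apply Rle_ge, Rmult_le_pos; auto).
  set (u := (c / eps)%R) in *.
  assert (Ec : (c = u * eps)%R) by (unfold u; field; lra).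
  assert (u <= INR l)%R by lra.
  assert (0 <= (INR l - u) * (eps * INR l))%R by (apply Rmult_le_pos; nra).
  rewrite Ec. simpl. nra.
Qed.

Theorem lemma9 :
  exists gO gE gT gP : nat -> R,
    little_o_sq gO /\ little_o_sq gE /\ little_o_sq gT /\ little_o_sq gP /\
    forall l s : nat, (1 <= l)%nat -> (1 <= s)%nat ->
      (Rabs (INR (MTFO_cost (init_list l) (sigma_gamma l s)) - INR s * (3 * INR l ^ 2))
         <= INR s * gO l)%R /\
      (Rabs (INR (MTFE_cost (init_list l) (sigma_gamma l s)) - INR s * (3 * INR l ^ 2))
         <= INR s * gE l)%R /\
      (Rabs (INR (TS_cost (init_list l) (sigma_gamma l s)) - INR s * (4 * INR l ^ 2))
         <= INR s * gT l)%R /\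
      (Rabs (INR (OPT (init_list l) (sigma_gamma l s)) - INR s * (2 * INR l ^ 2))
         <= INR s * gP l)%R.
Proof.
  exists (fun l => 3 * INR l)%R, (fun l => 3 * INR l)%R, (fun l => 2 * INR l)%R, (fun l => 4 * INR l)%R.
  split; [apply lo_lin; lra|]. split; [apply lo_lin; lra|].
  split; [apply lo_lin; lra|]. split; [apply lo_lin; lra|].
  intros l s _ _.
  rewrite MTFO_val, MTFE_val, TS_val, OPT_val.
  pose proof (pos_INR l). pose proof (pos_INR s).
  assert (E3 : INR 3 = 3%R) by (simpl; lra).
  assert (E2 : INR 2 = 2%R) by (simpl; lra).
  assert (E1 : INR 1 = 1%R) by (simpl; lra).
  repeat rewrite ?mult_INR, ?plus_INR. rewrite ?E3, ?E2, ?E1.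
  repeat split; rewrite Rabs_right; try nra.
Qed.
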